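(* Let $M_C$ be a mixed cycle of order $n$ and let $\eta(M_C)$ be the nullity of $N(M_C)$. Then $\eta(M_C)=0$ if $n$ is odd; if $n\equiv 2\pmod 4$, then $\eta(M_C)=2$ when $M_C$ is negative and $\eta(M_C)=0$ when $M_C$ is positive, semi-positive or semi-negative; if $n\equiv 0\pmod 4$, then $\eta(M_C)=2$ when $M_C$ is positive and $\eta(M_C)=0$ when $M_C$ is negative, semi-positive or semi-negative.
   Context: A mixed graph is obtained from a finite simple graph by orienting the edges of some subset of its edges. With $\omega=\frac{1+\mathbf{i}\sqrt3}{2}$, the matrix $N=(n_{st})$ has entry $\omega$ for an arc from $u_s$ to $u_t$, $\bar\omega$ for an arc from $u_t$ to $u_s$, $1$ for an undirected edge, $0$ otherwise. A mixed cycle is a mixed graph whose underlying graph is a cycle $v_1v_2\cdots v_nv_1$ ($n\ge3$); its weight is $n_{12}n_{23}\cdots n_{n1}$, a sixth root of unity. It is positive if the weight is $1$, negative if $-1$, semi-positive if the weight is $\omega$ or $\bar\omega$, semi-negative if it is $-\omega$ or $-\bar\omega$. *)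

(* Defs.v *)
From HB Require Import structures.
From mathcomp Require Import all_boot all_order all_algebra all_field.
Set Implicit Arguments. Unset Strict Implicit. Unset Printing Implicit Defensive.
Import Order.TTheory GRing.Theory Num.Theory.
Local Open Scope ring_scope.

(* A mixed cycle of order n: vertices u_0,...,u_{n-1} ('I_n), edges
   {u_i, u_{i+1 mod n}}; each edge is undirected, or an arc u_i -> u_{i+1}
   (Forward), or an arc u_{i+1} -> u_i (Backward). *)
Inductive orient := Undirected | Forward | Backward.

Definition omega : algC := (1 + 'i * sqrtC 3) / 2.

Definition edge_wt (e : orient) : algC :=
  match e with
  | Undirected => 1
  | Forward => omega
  | Backward => omega^*
  end.

Definition mixedN (n : nat) (o : 'I_n -> orient) : 'M[algC]_n :=
  \matrix_(s, t)
    (if t == ordS s then edge_wt (o s)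
     else if s == ordS t then (edge_wt (o t))^*
     else 0).

Definition cycle_weight (n : nat) (o : 'I_n -> orient) : algC :=
  \prod_(i < n) edge_wt (o i).

Definition positive_cycle n (o : 'I_n -> orient) := cycle_weight o = 1.
Definition negative_cycle n (o : 'I_n -> orient) := cycle_weight o = -1.
Definition semipositive_cycle n (o : 'I_n -> orient) :=
  cycle_weight o = omega \/ cycle_weight o = omega^*.
Definition seminegative_cycle n (o : 'I_n -> orient) :=
  cycle_weight o = - omega \/ cycle_weight o = - omega^*.

Definition nullity n (A : 'M[algC]_n) : nat := (n - \rank A)%N.

(* Main.v *)
Require Import Defs.
From mathcomp Require Import all_boot all_order all_algebra all_field.
From mathcomp Require Import ring zify.
Set Implicit Arguments. Unset Strict Implicit. Unset Printing Implicit Defensive.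
Import Order.TTheory GRing.Theory Num.Theory.
Local Open Scope ring_scope.

Lemma omc : omega^* = 1 - omega.
Proof.
have h3 : (sqrtC 3)^* = sqrtC 3 :> algC by apply: geC0_conj; rewrite sqrtC_ge0 ler0n.
rewrite /omega !(rmorphM, rmorphD, rmorph1, fmorphV, rmorph_nat) /= conjCi h3.
have h2 : (2 : algC) != 0 by rewrite pnatr_eq0.
by field.
Qed.

Lemma om2 : omega ^+ 2 - omega + 1 = 0.
Proof.
have h2 : (2 : algC) != 0 by rewrite pnatr_eq0.
have e : omega^+2 - omega + 1 = (3 + ('i * sqrtC 3)^+2) / 4.
  rewrite /omega; field.
  by [].
by rewrite e exprMn sqrCi sqrtCK mulN1r subrr mul0r.
Qed.

Lemma wt_unit e : (edge_wt e)^* * edge_wt e = 1.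
Proof.
case: e => /=; first by rewrite rmorph1 mulr1.
  rewrite omc; transitivity (1 - (omega^+2 - omega + 1)); first by ring.
  by rewrite om2 subr0.
rewrite conjCK omc; transitivity (1 - (omega^+2 - omega + 1)); first by ring.
by rewrite om2 subr0.
Qed.

Lemma om6 : omega ^+ 6 = 1.
Proof.
have h := om2.
have e3 : omega ^+ 3 = -1.
  apply/eqP; rewrite -addr_eq0; apply/eqP.
  transitivity ((omega + 1) * (omega ^+ 2 - omega + 1)); first by ring.
  by rewrite h mulr0.
have -> : (6 = 3 * 2)%N by [].
by rewrite exprM e3 sqrrN expr1n.
Qed.

Lemma wt6 e : edge_wt e ^+ 6 = 1.
Proof.
case: e => /=; first by rewrite expr1n.
  exact: om6.
by rewrite -rmorphXn om6 rmorph1.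
Qed.

Lemma W6 n (o : 'I_n -> orient) : cycle_weight o ^+ 6 = 1.
Proof. by rewrite /cycle_weight -prodrXl big1 // => i _; rewrite wt6. Qed.

Lemma om_ne1 : omega != 1.
Proof. apply/eqP => e; have := om2; rewrite e expr1n subrr add0r => /eqP; by rewrite oner_eq0. Qed.
Lemma om_neN1 : omega != -1.
Proof. apply/eqP => e; have := om2; rewrite e sqrrN expr1n opprK => h3.
have : (3%:R : algC) == 0 by rewrite -h3; apply/eqP; ring.
by rewrite pnatr_eq0. Qed.
Lemma omc_ne1 : omega^* != 1.
Proof. apply/eqP => e; have := om_ne1; rewrite -[omega]conjCK e rmorph1 eqxx. by []. Qed.
Lemma omc_neN1 : omega^* != -1.
Proof. apply/eqP => e; have := om_neN1; rewrite -[omega]conjCK e rmorphN rmorph1 eqxx. by []. Qed.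

Definition ix n (p : (0 < n)%N) (k : nat) : 'I_n := Ordinal (ltn_pmod k p).

Notation wk p o k := (edge_wt (o (ix p k))).

Lemma ix_addn n (p : (0 < n)%N) k : ix p (k + n) = ix p k.
Proof. by apply: val_inj; rewrite /= modnDr. Qed.

Lemma ix_val n (p : (0 < n)%N) (i : 'I_n) : ix p i = i.
Proof. by apply: val_inj; rewrite /= modn_small. Qed.

Lemma ordS_ix n (p : (0 < n)%N) k : ordS (ix p k) = ix p k.+1.
Proof. by apply: val_inj; rewrite /= -addn1 modnDml addn1. Qed.

Lemma ord_pred_ix n (p : (0 < n)%N) k : ord_pred (ix p k.+1) = ix p k.
Proof. by rewrite -ordS_ix ordSK. Qed.

Lemma ordSS_neq n (hn : (2 < n)%N) (t : 'I_n) : ordS (ordS t) != t.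
Proof.
apply/negP => /eqP/(congr1 val) /=; case: t => t ht /=.
case: (ltngtP t.+1 n) => h1; last first.
- by rewrite h1 modnn modn_small //; lia.
- lia.
rewrite (modn_small h1).
case: (ltngtP t.+2 n) => h2.
- rewrite modn_small //; lia.
- lia.
- rewrite h2 modnn; lia.
Qed.

Lemma colEq n (hn : (2 < n)%N) (o : 'I_n -> orient) (u : 'rV[algC]_n) t :
 (u *m mixedN o) 0 t = u 0 (ord_pred t) * edge_wt (o (ord_pred t))
                        + u 0 (ordS t) * (edge_wt (o t))^*.
Proof.
rewrite mxE (bigD1 (ord_pred t)) //= (bigD1 (ordS t)) /=; last first.
  apply/eqP => e; move: (ordSS_neq hn t); by rewrite e ord_predK eqxx.
rewrite big1 ?addr0; last first.
  move=> s /andP[h1 h2]; rewrite mxE.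
  have -> : (t == ordS s) = false.
    by apply/negbTE; apply: contra h1 => /eqP ->; rewrite ordSK.
  by rewrite (negbTE h2) mulr0.
rewrite !mxE ord_predK eqxx; congr (_ + _ * _).
by rewrite eq_sym (negbTE (ordSS_neq hn t)) eqxx.
Qed.


Definition recf n (p : (0 < n)%N) (o : 'I_n -> orient) (f : nat -> algC) :=
  forall k, f k.+2 = - (wk p o k * wk p o k.+1) * f k.

Lemma ker_rec n (p : (0 < n)%N) (hn : (2 < n)%N) o (u : 'rV_n) :
  u *m mixedN o = 0 -> recf p o (fun k => u 0 (ix p k)).
Proof.
move=> hu k /=; have := colEq hn o u (ix p k.+1).
rewrite hu mxE ord_pred_ix ordS_ix => e.
have h := wt_unit (o (ix p k.+1)).
rewrite -[LHS]mulr1 -h mulrA.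
have -> : u 0 (ix p k.+2) * (wk p o k.+1)^* = - (u 0 (ix p k) * wk p o k).
  by apply/eqP; rewrite -addr_eq0 addrC -e.
ring.
Qed.

Lemma closedf (f g : nat -> algC) : (forall k, f k.+2 = - (g k * g k.+1) * f k) ->
  forall m k, f (k + m.*2)%N = (-1)^+m * (\prod_(j < m.*2) g (k + j)%N) * f k.
Proof.
move=> hf; elim=> [|m IH] k; first by rewrite addn0 big_ord0 expr0 !mul1r.
rewrite doubleS addnS addnS hf IH !big_ord_recr /= exprS -addnS; ring.
Qed.

Lemma prod_shift (g : nat -> algC) N : (0 < N)%N -> (forall k, g (k + N)%N = g k) ->
  forall k, \prod_(j < N) g (k + j)%N = \prod_(j < N) g j.
Proof.
case: N => [//|N] _ hg; elim=> [|k IH].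
  by apply: eq_bigr => j _; rewrite add0n.
rewrite -IH big_ord_recr big_ord_recl /= mulrC; congr (_ * _).
  by rewrite addn0 addSnnS hg.
by apply: eq_bigr => j _; rewrite /bump /= add1n addSnnS.
Qed.


Lemma prod_wk n (p : (0 < n)%N) (o : 'I_n -> orient) :
  \prod_(j < n) wk p o j = cycle_weight o.
Proof. by apply: eq_bigr => j _; rewrite ix_val. Qed.

Lemma cyc n (p : (0 < n)%N) (o : 'I_n -> orient) k :
  \prod_(j < n) wk p o (k + j)%N = cycle_weight o.
Proof.
rewrite (@prod_shift (fun j => wk p o j)) ?prod_wk // => i.
by rewrite ix_addn.
Qed.

Lemma per_even n (p : (0 < n)%N) o m (hm : n = m.*2) f :
  recf p o f -> forall k, f (k + n)%N = (-1)^+m * cycle_weight o * f k.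
Proof.
move=> hf k; move: (closedf hf m k); rewrite -hm => ->.
by rewrite cyc.
Qed.

Lemma per_odd n (p : (0 < n)%N) o f :
  recf p o f -> forall k, f (k + n.*2)%N = (-1)^+n * (cycle_weight o)^+2 * f k.
Proof.
move=> hf k; rewrite (closedf hf n k); congr (_ * _ * _).
rewrite -addnn big_split_ord /= cyc.
under eq_bigr do rewrite addnA.
by rewrite cyc expr2.
Qed.

Lemma kill (c x : algC) : c != 1 -> x = c * x -> x = 0.
Proof.
move=> hc e; have : (1 - c) * x = 0 by rewrite mulrBl mul1r -e subrr.
move/eqP; rewrite mulf_eq0 subr_eq0 eq_sym (negbTE hc) /=; by move/eqP.
Qed.

Definition Pc n (p : (0 < n)%N) o (c : algC) :=
  forall f, recf p o f -> (forall k, f (k + n)%N = f k) -> forall k, f k = c * f k.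

Lemma ker0 n (p : (0 < n)%N) (hn : (2 < n)%N) o c : Pc p o c -> c != 1 ->
  forall u : 'rV_n, u *m mixedN o = 0 -> u = 0.
Proof.
move=> H hc u hu; apply/rowP => i; rewrite mxE.
have := kill hc (H _ (ker_rec p hn hu) (fun k => congr1 _ (ix_addn p k)) i).
by rewrite /= ix_val.
Qed.

Lemma ker_up n (p : (0 < n)%N) (hn : (2 < n)%N) o (u : 'rV_n) :
  u *m mixedN o = 0 -> u 0 (ix p 0) = 0 -> u 0 (ix p 1) = 0 -> u = 0.
Proof.
move=> hu h0 h1; have hr := ker_rec p hn hu.
have H : forall k, u 0 (ix p k) = 0 /\ u 0 (ix p k.+1) = 0.
  elim=> [|k [IH1 IH2]]; first by [].
  by split=> //; rewrite (hr k) /= IH1 mulr0.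
apply/rowP => i; rewrite mxE -(ix_val p i); by case: (H i).
Qed.

Fixpoint sq (g : nat -> algC) (a b : algC) (k : nat) : algC :=
  match k with 0%N => a | 1%N => b | k'.+2 => - (g k' * g k'.+1) * sq g a b k' end.

Lemma per_mod (f : nat -> algC) n : (forall k, f (k + n)%N = f k) ->
  forall k, f (k %% n)%N = f k.
Proof.
move=> h k; rewrite {2}(divn_eq k n); elim: (k %/ n)%N => [|q IH].
  by rewrite mul0n add0n.
have -> : (q.+1 * n + k %% n = (q * n + k %% n) + n)%N by rewrite mulSn; nia.
by rewrite h.
Qed.

Lemma cons n (p : (0 < n)%N) (hn : (2 < n)%N) o f : recf p o f ->
  (forall k, f (k + n)%N = f k) ->
  forall u : 'rV_n, (forall i : 'I_n, u 0 i = f i) -> u *m mixedN o = 0.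
Proof.
move=> hf hp u hu.
suff H : forall k, (u *m mixedN o) 0 (ix p k.+1) = 0.
  apply/rowP => t; rewrite [RHS]mxE.
  have -> : t = ix p (t + n.-1).+1.
    apply: val_inj; rewrite /= -addnS prednK // modnDr modn_small //.
  exact: H.
move=> k; rewrite colEq // ord_pred_ix ordS_ix !hu /= !per_mod // hf.
have h := wt_unit (o (ix p k.+1)).
transitivity (f k * wk p o k * (1 - (wk p o k.+1)^* * wk p o k.+1)); first by ring.
by rewrite h subrr mulr0.
Qed.

Definition Qm n (p : (0 < n)%N) : 'M[algC]_(n, 2) := \matrix_(i, j) (i == ix p j)%:R.

Lemma mulQ m n (p : (0 < n)%N) (X : 'M[algC]_(m, n)) r (j : 'I_2) :
  (X *m Qm p) r j = X r (ix p j).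
Proof.
rewrite mxE (bigD1 (ix p j)) //= big1 ?addr0; first by rewrite mxE eqxx mulr1.
by move=> i hi; rewrite mxE (negbTE hi) mulr0.
Qed.

Lemma null0 n (A : 'M[algC]_n) : (forall u : 'rV_n, u *m A = 0 -> u = 0) ->
  nullity A = 0%N.
Proof.
move=> H; rewrite /nullity -mxrank_ker; apply/eqP; rewrite mxrank_eq0.
apply/eqP/row_matrixP => r; rewrite row0; apply: H.
by rewrite -row_mul mulmx_ker row0.
Qed.

Lemma null2 n (p : (0 < n)%N) (A : 'M[algC]_n)
  (H1 : forall u : 'rV_n, u *m A = 0 -> u 0 (ix p 0) = 0 -> u 0 (ix p 1) = 0 -> u = 0)
  (V : 'M[algC]_(2, n)) (hV : V *m A = 0) (hVQ : V *m Qm p = 1%:M) :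
  nullity A = 2%N.
Proof.
rewrite /nullity -mxrank_ker; apply/eqP; rewrite eqn_leq; apply/andP; split.
  rewrite -(mxrank_mul_ker (kermx A) (Qm p)).
  have -> : \rank (kermx A :&: kermx (Qm p))%MS = 0%N.
    apply/eqP; rewrite mxrank_eq0; apply/eqP/row_matrixP => r; rewrite row0.
    set x := row r _.
    have := row_sub r (kermx A :&: kermx (Qm p))%MS; rewrite -/x sub_capmx.
    case/andP => /sub_kermxP h1 /sub_kermxP h2.
    apply: H1 => //.
      by have := congr1 (fun M : 'M[algC]_(1,2) => M 0 ord0) h2; rewrite mulQ mxE => ->; rewrite mxE.
    by have := congr1 (fun M : 'M[algC]_(1,2) => M 0 (Ordinal (isT : (1 < 2)%N))) h2; rewrite mulQ mxE => ->; rewrite mxE.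
  by rewrite addn0; exact: rank_leq_col.
have : (V <= kermx A)%MS by apply/sub_kermxP.
move/mxrankS; apply: leq_trans.
apply: leq_trans (mxrankM_maxl V (Qm p)).
by rewrite hVQ mxrank1.
Qed.

Lemma neg1_ne1 : - (1 : algC) != 1.
Proof.
apply/eqP => h; have : (2%:R : algC) == 0.
  by apply/eqP; transitivity (1 - -1 : algC); [ring | rewrite h subrr].
by rewrite pnatr_eq0.
Qed.

Theorem lemma5p4 (n : nat) (hn : (3 <= n)%N) (o : 'I_n -> orient) :
  (odd n -> nullity (mixedN o) = 0%N) /\
  ((n %% 4 = 2)%N ->
     (negative_cycle o -> nullity (mixedN o) = 2%N) /\
     (positive_cycle o \/ semipositive_cycle o \/ seminegative_cycle o ->
        nullity (mixedN o) = 0%N)) /\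
  ((n %% 4 = 0)%N ->
     (positive_cycle o -> nullity (mixedN o) = 2%N) /\
     (negative_cycle o \/ semipositive_cycle o \/ seminegative_cycle o ->
        nullity (mixedN o) = 0%N)).
Proof.
have p : (0 < n)%N by lia.
have hn2 : (2 < n)%N := hn.
rewrite /negative_cycle /positive_cycle /semipositive_cycle /seminegative_cycle.
have W6 := W6 o.
set W := cycle_weight o in W6 *.
have N0 : forall c, Pc p o c -> c != 1 -> nullity (mixedN o) = 0%N.
  by move=> c Hc hc; apply: null0; exact: (@ker0 n p hn2 o c Hc hc).
have Peven : forall m, n = m.*2 -> Pc p o ((-1)^+m * W).
  by move=> m hm f hf hp k; rewrite -(@per_even n p o m hm f hf k) hp.
have N2 : forall m, n = m.*2 -> (-1)^+m * W = 1 -> nullity (mixedN o) = 2%N.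
  move=> m hm hc.
  have Hper : forall a b k, sq (fun j => wk p o j) a b (k + n) = sq (fun j => wk p o j) a b k.
    move=> a b k.
    by rewrite (@per_even n p o m hm _ (fun k => erefl _)) hc mul1r.
  apply: (@null2 n p _ _ (\matrix_(r < 2, i < n) sq (fun j => wk p o j) (val r == 0%N)%:R (val r == 1%N)%:R i)).
  - by move=> u hu h0 h1; exact: (@ker_up n p hn2 o u hu h0 h1).
  - apply/row_matrixP => r; rewrite row_mul row0.
    apply: (@cons n p hn2 o _ (fun k => erefl _) (Hper _ _)) => i.
    by rewrite !mxE.
  - apply/matrixP => r j; rewrite mulQ !mxE /= modn_small; last first.
      by have := ltn_ord j; lia.
    by case: r j => [[|[|//]] hr] [[|[|//]] hj].
split; [|split].
- move=> hodd; apply: (N0 (- W^+2)).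
    move=> f hf hp k.
    have e : f (k + n.*2)%N = f k by rewrite -addnn addnA !hp.
    by rewrite -{1}e (@per_odd n p o f hf k) -signr_odd hodd expr1 mulN1r.
  apply/eqP => e.
  have e2 : W^+2 = -1 by rewrite -[W^+2]opprK e.
  have : W^+6 = -1.
    by rewrite (_ : 6 = 2 * 3)%N // exprM e2 exprS sqrrN expr1n mulr1.
  rewrite W6 => h; move: neg1_ne1; by rewrite -h eqxx.
- move=> h4.
  have hm : n = ((n %/ 4).*2.+1).*2 by lia.
  have sg : (-1)^+((n %/ 4).*2.+1) = -1 :> algC.
    by rewrite -signr_odd /= odd_double /= expr1.
  split.
    by move=> hW; apply: (N2 _ hm); rewrite sg hW mulN1r opprK.
  move=> H; apply: (N0 _ (Peven _ hm)); rewrite sg mulN1r.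
  case: H => [hW|[[hW|hW]|[hW|hW]]]; rewrite hW.
  + exact: neg1_ne1.
  + rewrite eqr_oppLR; exact: om_neN1.
  + rewrite eqr_oppLR; exact: omc_neN1.
  + rewrite opprK; exact: om_ne1.
  + rewrite opprK; exact: omc_ne1.
- move=> h4.
  have hm : n = ((n %/ 4).*2).*2 by lia.
  have sg : (-1)^+((n %/ 4).*2) = 1 :> algC.
    by rewrite -signr_odd odd_double expr0.
  split.
    by move=> hW; apply: (N2 _ hm); rewrite sg hW mul1r.
  move=> H; apply: (N0 _ (Peven _ hm)); rewrite sg mul1r.
  case: H => [hW|[[hW|hW]|[hW|hW]]]; rewrite hW.
  + exact: neg1_ne1.
  + exact: om_ne1.
  + exact: omc_ne1.
  + rewrite eqr_oppLR; exact: om_neN1.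
  + rewrite eqr_oppLR; exact: omc_neN1.
Qed.
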